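(* Assume $A_{11}=0$. Then the local truncation error of the ROE scheme $$\frac{f^i_{j,n+1}-f^i_{j,n}}{\Delta t}+\frac{\lambda_i}{2\Delta x}(f^i_{j+1,n}-f^i_{j-1,n})-\frac{|\lambda_i|}{2\Delta x}(f^i_{j+1,n}-2f^i_{j,n}+f^i_{j-1,n})$$ $$=\frac{M_i(u_{j-1,n})+2M_i(u_{j,n})+M_i(u_{j+1,n})}{4}+\frac{\mathrm{sgn}(\lambda_i)}{4}\big(M_i(u_{j-1,n})-M_i(u_{j+1,n})\big)-\frac{f^i_{j-1,n}+2f^i_{j,n}+f^i_{j+1,n}}{4}-\frac{\mathrm{sgn}(\lambda_i)}{4}\big(f^i_{j-1,n}-f^i_{j+1,n}\big),$$ $i=1,\dots,m$, with fixed ratio $\rho=\Delta t/\Delta x$, satisfies, as $t\to+\infty$, $\mathcal{T}_u=O(\Delta x\,t^{-2})+O(\Delta x^2t^{-3/2})$ and $\mathcal{T}_{\tilde Z}=O(\Delta x\,t^{-2})+O(\Delta x^2t^{-3/2})$.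
   Context: Same setting as Theorem 3.1: BGK system $\partial_tf^i+\lambda_i\partial_xf^i=M_i(u)-f^i$ with $u=\sum_if^i$, Condition ED, the matrix $D$ with $D_{11}=I_k$, $D_{12}=(I_k\cdots I_k)$ transforming to $Z=Df=(u,\tilde Z)$ solving $\partial_tZ+A\partial_xZ=-Z+DM(u)$ with $A=D\Lambda D^{-1}$ symmetric; $A_{11}$ is the top-left $k\times k$ block of $A$ (which equals $\sum_i\lambda_ih_i^{-1}$ where $D^TD=\mathrm{diag}(h_1,\dots,h_m)$). The truncation error is the residual of the scheme on the exact smooth solution, transformed by $D$: $(\mathcal{T}_u,\mathcal{T}_{\tilde Z})=D(\mathcal{T}^1,\dots,\mathcal{T}^m)$. The exact solution is the global smooth solution from small smooth initial data and satisfies the decay estimates $\|\partial_x^\beta Z\|_{L^\infty}\lesssim t^{-1/2-\beta/2}$, $\|\partial_x^\beta\tilde Z\|_{L^\infty}\lesssim t^{-1-\beta/2}$, $\|\partial_x^\beta Z_t\|_{L^\infty}\lesssim t^{-1-\beta/2}$, $\|\partial_x^\beta\tilde Z_t\|_{L^\infty}\lesssim t^{-3/2-\beta/2}$, and, when $A_{11}=0$, $\|u_{tt}\|,\|u_{tx}\|,\|\tilde Z_t\|,\|\tilde Z_{tt}\|\lesssim t^{-2}$. *)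

(* Defs.v *)
From Stdlib Require Import Reals Lra Lia Arith List ClassicalEpsilon.
Open Scope R_scope.

(* deriv1 h x = h'(x) whenever h is differentiable at x (limits are unique). *)
Definition deriv1 (h : R -> R) (x : R) : R :=
  epsilon (inhabits 0%R) (fun l => derivable_pt_lim h x l).

Definition diffble (h : R -> R) (x : R) : Prop := exists l, derivable_pt_lim h x l.

Definition PDt (F : R -> R -> R) : R -> R -> R :=
  fun t x => deriv1 (fun s => F s x) t.
Definition PDx (F : R -> R -> R) : R -> R -> R :=
  fun t x => deriv1 (fun y => F t y) x.

Definition DxN (beta : nat) (F : R -> R -> R) : R -> R -> R :=
  Nat.iter beta PDx F.

Fixpoint iterD (w : list bool) (F : R -> R -> R) : R -> R -> R :=
  match w with
  | nil => F
  | b :: w' => (if b then PDt else PDx) (iterD w' F)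
  end.

Definition cont2_at (G : R -> R -> R) (t x : R) : Prop :=
  forall eps, 0 < eps -> exists del, 0 < del /\
    forall t' x', Rabs (t' - t) < del -> Rabs (x' - x) < del ->
      Rabs (G t' x' - G t x) < eps.

Definition smooth_pos (F : R -> R -> R) : Prop :=
  forall (w : list bool) (t x : R), 0 < t ->
    cont2_at (iterD w F) t x /\
    diffble (fun s => iterD w F s x) t /\
    diffble (fun y => iterD w F t y) x.

(* ---------- Vectors of R^k represented as nat -> R (coords 0..k-1) ---------- *)

Definition upd (v : nat -> R) (c : nat) (s : R) : nat -> R :=
  fun d => if Nat.eqb d c then s else v d.

Definition DirD (c : nat) (G : (nat -> R) -> R) : (nat -> R) -> R :=
  fun v => deriv1 (fun s => G (upd v c s)) (v c).

Fixpoint iterDk (w : list nat) (G : (nat -> R) -> R) : (nat -> R) -> R :=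
  match w with
  | nil => G
  | c :: w' => DirD c (iterDk w' G)
  end.

(* continuity w.r.t. the first k coordinates (this also forces G to depend
   only on the first k coordinates) *)
Definition contRk (k : nat) (G : (nat -> R) -> R) : Prop :=
  forall v eps, 0 < eps -> exists del, 0 < del /\
    forall w, (forall c, (c < k)%nat -> Rabs (w c - v c) < del) ->
      Rabs (G w - G v) < eps.

Definition smoothRk (k : nat) (G : (nat -> R) -> R) : Prop :=
  forall w : list nat, Forall (fun c => (c < k)%nat) w ->
    contRk k (iterDk w G) /\
    forall c v, (c < k)%nat -> diffble (fun s => iterDk w G (upd v c s)) (v c).

Fixpoint sumN (n : nat) (g : nat -> R) : R :=
  match n with
  | O => 0
  | S n' => sumN n' g + g n'
  end.

Definition sgn (a : R) : R :=
  if Rlt_dec 0 a then 1 else if Rlt_dec a 0 then -1 else 0.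

(* f i c t x : component c (0<=c<k) of f^i (0<=i<m) at (t,x).
   Global index of (i,c) in R^{mk} : i*k + c, so s |-> (s / k, s mod k). *)

Definition uu (m : nat) (f : nat -> nat -> R -> R -> R) (c : nat) : R -> R -> R :=
  fun t x => sumN m (fun i => f i c t x).

Definition uvec (m : nat) (f : nat -> nat -> R -> R -> R) (t x : R) : nat -> R :=
  fun c => uu m f c t x.

Definition ZZ (m k : nat) (D : nat -> nat -> R) (f : nat -> nat -> R -> R -> R)
  (r : nat) : R -> R -> R :=
  fun t x => sumN (m * k) (fun s => D r s * f (s / k)%nat (s mod k)%nat t x).

(* A = D Lambda D^{-1}, Lambda = diag(lambda_1 I_k, ..., lambda_m I_k) *)
Definition AA (m k : nat) (D Dinv : nat -> nat -> R) (lam : nat -> R)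
  (r s : nat) : R :=
  sumN (m * k) (fun q => D r q * lam (q / k)%nat * Dinv q s).

Definition roe_residual (m : nat) (lam : nat -> R)
  (M : nat -> (nat -> R) -> (nat -> R)) (f : nat -> nat -> R -> R -> R)
  (dt dx : R) (i c : nat) (t x : R) : R :=
  let F := fun tt xx => f i c tt xx in
  let Mi := fun xx => M i (uvec m f t xx) c in
  let fm := F t (x - dx) in let f0 := F t x in let fp := F t (x + dx) in
  let Mm := Mi (x - dx) in let M0 := Mi x in let Mp := Mi (x + dx) in
  (F (t + dt) x - f0) / dt
  + lam i / (2 * dx) * (fp - fm)
  - Rabs (lam i) / (2 * dx) * (fp - 2 * f0 + fm)
  - ( (Mm + 2 * M0 + Mp) / 4
      + sgn (lam i) / 4 * (Mm - Mp)
      - (fm + 2 * f0 + fp) / 4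
      - sgn (lam i) / 4 * (fm - fp) ).

(* Transformed truncation error (T_u, T_Ztilde) = D (T^1, ..., T^m) *)
Definition trunc_Z (m k : nat) (D : nat -> nat -> R) (lam : nat -> R)
  (M : nat -> (nat -> R) -> (nat -> R)) (f : nat -> nat -> R -> R -> R)
  (dt dx : R) (r : nat) (t x : R) : R :=
  sumN (m * k) (fun s => D r s * roe_residual m lam M f dt dx (s / k)%nat (s mod k)%nat t x).

(* Main.v *)
Require Import Defs.
From Stdlib Require Import Reals Lra Lia List ClassicalEpsilon FunctionalExtensionality.
Import ListNotations.
Open Scope R_scope.

Lemma Rabs_bnd a b : Rabs a <= b -> -b <= a <= b.
Proof. unfold Rabs; destruct (Rcase_abs a); intros; lra. Qed.

Lemma deriv1_eq h x l : derivable_pt_lim h x l -> deriv1 h x = l.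
Proof.
  intro H. unfold deriv1.
  pose proof (epsilon_spec (inhabits 0) (fun l => derivable_pt_lim h x l) (ex_intro _ l H)) as E.
  eapply uniqueness_limite; eauto.
Qed.

Lemma diffble_lim h x : diffble h x -> derivable_pt_lim h x (deriv1 h x).
Proof.
  intros [l H]. rewrite (deriv1_eq _ _ _ H). exact H.
Qed.

Lemma dloc g h t l : derivable_pt_lim g t l ->
  (exists del, 0 < del /\ forall y, Rabs (y - t) < del -> h y = g y) ->
  derivable_pt_lim h t l.
Proof.
  intros H [del [Hd He]] eps Heps.
  destruct (H eps Heps) as [delta Hdel].
  assert (Hp : 0 < Rmin delta del) by (apply Rmin_pos; [apply cond_pos| lra]).
  exists (mkposreal _ Hp). intros hh Hh Hlt. simpl in Hlt.
  rewrite (He (t + hh)), (He t).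
  - apply Hdel; auto. eapply Rlt_le_trans; [exact Hlt| apply Rmin_l].
  - replace (t - t) with 0 by ring. rewrite Rabs_R0. lra.
  - replace (t + hh - t) with hh by ring. eapply Rlt_le_trans; [exact Hlt| apply Rmin_r].
Qed.

Lemma dval f x l l' : derivable_pt_lim f x l -> l = l' -> derivable_pt_lim f x l'.
Proof. intros H ->; exact H. Qed.

Lemma dext f g x l : derivable_pt_lim f x l -> (forall y, g y = f y) -> derivable_pt_lim g x l.
Proof. intros H E. apply dloc with f; auto. exists 1; split; [lra| auto]. Qed.

Lemma sum_derivable n (a : nat -> R) (G : nat -> R -> R) (l : nat -> R) y :
  (forall q, (q < n)%nat -> derivable_pt_lim (G q) y (l q)) ->
  derivable_pt_lim (fun z => sumN n (fun q => a q * G q z)) y (sumN n (fun q => a q * l q)).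
Proof.
  induction n; intros H; simpl.
  - apply dext with (fct_cte 0). apply derivable_pt_lim_const. reflexivity.
  - apply dext with (plus_fct (fun z => sumN n (fun q => a q * G q z)) (mult_real_fct (a n) (G n))).
    + apply derivable_pt_lim_plus. apply IHn; intros; apply H; lia.
      apply derivable_pt_lim_scal. apply H; lia.
    + intros; reflexivity.
Qed.

Lemma lin w n (a : nat -> R) (G : nat -> R -> R -> R) :
  (forall q, (q < n)%nat -> smooth_pos (G q)) ->
  forall t x, 0 < t ->
  iterD w (fun t x => sumN n (fun q => a q * G q t x)) t x
  = sumN n (fun q => a q * iterD w (G q) t x).
Proof.
  intros HG. induction w as [|b w IH]; intros t x Ht; [reflexivity|].
  destruct b; simpl; unfold PDt, PDx; apply deriv1_eq.
  - apply dloc with (fun s => sumN n (fun q => a q * iterD w (G q) s x)).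
    + apply sum_derivable. intros q Hq. apply diffble_lim. apply (HG q Hq w t x Ht).
    + exists t; split; auto. intros y Hy. apply IH.
      apply Rabs_def2 in Hy; lra.
  - apply dloc with (fun s => sumN n (fun q => a q * iterD w (G q) t s)).
    + apply sum_derivable. intros q Hq. apply diffble_lim. apply (HG q Hq w t x Ht).
    + exists 1; split; [lra|]. intros y Hy. apply IH; auto.
Qed.

Definition btw a b y := Rmin a b <= y <= Rmax a b.

Lemma btw_l a b : btw a b a.
Proof. unfold btw, Rmin, Rmax; destruct (Rle_dec a b); lra. Qed.

Lemma btw_sub a b y z : btw a b y -> btw a y z -> btw a b z.
Proof. unfold btw, Rmin, Rmax; destruct (Rle_dec a b), (Rle_dec a y); lra. Qed.

Lemma btw_abs a b y : btw a b y -> Rabs (y - a) <= Rabs (b - a).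
Proof.
  unfold btw, Rmin, Rmax; destruct (Rle_dec a b); intros;
  unfold Rabs; destruct (Rcase_abs (y-a)), (Rcase_abs (b-a)); lra.
Qed.

Lemma MVTb phi phi' a b B :
  (forall y, btw a b y -> derivable_pt_lim phi y (phi' y) /\ Rabs (phi' y) <= B) ->
  Rabs (phi b - phi a) <= B * Rabs (b - a).
Proof.
  intros H.
  destruct (Rtotal_order a b) as [Hab|[Hab|Hab]].
  - destruct (MVT_cor2 phi phi' a b Hab) as [c [Ec Hc]].
    + intros c Hc. apply H. unfold btw, Rmin, Rmax; destruct (Rle_dec a b); lra.
    + rewrite Ec, Rabs_mult. apply Rmult_le_compat_r; [apply Rabs_pos|].
      apply H. unfold btw, Rmin, Rmax; destruct (Rle_dec a b); lra.
  - subst. replace (phi b - phi b) with 0 by ring. replace (b-b) with 0 by ring.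
    rewrite Rabs_R0, Rmult_0_r; lra.
  - destruct (MVT_cor2 phi phi' b a Hab) as [c [Ec Hc]].
    + intros c Hc. apply H. unfold btw, Rmin, Rmax; destruct (Rle_dec a b); lra.
    + replace (phi b - phi a) with (- (phi a - phi b)) by ring.
      replace (b - a) with (- (a - b)) by ring.
      rewrite !Rabs_Ropp, Ec, Rabs_mult. apply Rmult_le_compat_r; [apply Rabs_pos|].
      apply H. unfold btw, Rmin, Rmax; destruct (Rle_dec a b); lra.
Qed.

Lemma T2 h h1 h2 a b K :
  (forall y, btw a b y -> derivable_pt_lim h y (h1 y) /\ derivable_pt_lim h1 y (h2 y)
     /\ Rabs (h2 y) <= K) ->
  Rabs (h b - h a - (b - a) * h1 a) <= K * (b - a)^2.
Proof.
  intros H.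
  assert (HK : 0 <= K) by (destruct (H a (btw_l a b)) as [_ [_ X]];
     eapply Rle_trans; [apply Rabs_pos| exact X]).
  pose (phi := fun y => h y - (y - a) * h1 a).
  assert (E : h b - h a - (b - a) * h1 a = phi b - phi a) by (unfold phi; ring).
  rewrite E.
  replace (K * (b - a)^2) with ((K * Rabs (b - a)) * Rabs (b - a)).
  2:{ rewrite Rmult_assoc, <- Rabs_mult. replace ((b-a)*(b-a)) with ((b-a)^2) by ring.
      rewrite Rabs_right; [ring| apply Rle_ge, pow2_ge_0]. }
  apply MVTb with (phi' := fun y => h1 y - h1 a).
  intros y Hy. split.
  - unfold phi. apply dext with (minus_fct h (mult_real_fct (h1 a) (minus_fct id (fct_cte a)))).
    + apply dval with (h1 y - h1 a * (1 - 0)).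
      apply derivable_pt_lim_minus. apply H; auto.
      apply derivable_pt_lim_scal. apply derivable_pt_lim_minus.
      apply derivable_pt_lim_id. apply derivable_pt_lim_const. ring.
    + intros z. unfold minus_fct, mult_real_fct, id, fct_cte. ring.
  - apply Rle_trans with (K * Rabs (y - a)).
    + apply MVTb with (phi' := h2). intros z Hz. apply H. eapply btw_sub; eauto.
    + apply Rmult_le_compat_l; auto. apply btw_abs; auto.
Qed.

Lemma T3 h h1 h2 h3 a b K :
  (forall y, btw a b y -> derivable_pt_lim h y (h1 y) /\ derivable_pt_lim h1 y (h2 y)
     /\ derivable_pt_lim h2 y (h3 y) /\ Rabs (h3 y) <= K) ->
  Rabs (h b - h a - (b - a) * h1 a - (b - a)^2 / 2 * h2 a) <= K * (b - a)^2 * Rabs (b - a).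
Proof.
  intros H.
  assert (HK : 0 <= K) by (destruct (H a (btw_l a b)) as [_ [_ [_ X]]];
     eapply Rle_trans; [apply Rabs_pos| exact X]).
  pose (phi := fun y => h y - (y - a) * h1 a - (y - a) * (y - a) / 2 * h2 a).
  assert (E : h b - h a - (b - a) * h1 a - (b - a)^2 / 2 * h2 a = phi b - phi a)
    by (unfold phi; field).
  rewrite E.
  apply MVTb with (phi' := fun y => h1 y - h1 a - (y - a) * h2 a).
  intros y Hy. split.
  - unfold phi. apply dext with (minus_fct (minus_fct h (mult_real_fct (h1 a) (minus_fct id (fct_cte a))))
       (mult_real_fct (h2 a / 2) (mult_fct (minus_fct id (fct_cte a)) (minus_fct id (fct_cte a))))).
    + eapply dval.
      apply derivable_pt_lim_minus. apply derivable_pt_lim_minus. apply H; auto.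
      apply derivable_pt_lim_scal. apply derivable_pt_lim_minus.
      apply derivable_pt_lim_id. apply derivable_pt_lim_const.
      apply derivable_pt_lim_scal. apply derivable_pt_lim_mult;
      (apply derivable_pt_lim_minus; [apply derivable_pt_lim_id| apply derivable_pt_lim_const]).
      unfold minus_fct, id, fct_cte. field.
    + intros z. unfold minus_fct, mult_real_fct, mult_fct, id, fct_cte. field.
  - apply Rle_trans with (K * (y - a)^2).
    + replace (h1 y - h1 a - (y - a) * h2 a) with (h1 y - h1 a - (y - a) * h2 a) by ring.
      apply T2 with (h2 := h3). intros z Hz. apply H. eapply btw_sub; eauto.
    + apply Rmult_le_compat_l; auto.
      pose proof (btw_abs _ _ _ Hy).
      rewrite <- (Rabs_right ((y-a)^2)) by (apply Rle_ge, pow2_ge_0).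
      rewrite <- (Rabs_right ((b-a)^2)) by (apply Rle_ge, pow2_ge_0).
      rewrite <- !RPow_abs. apply pow_incr. split; auto. apply Rabs_pos.
Qed.

Lemma sumN_ext n g h : (forall q, (q < n)%nat -> g q = h q) -> sumN n g = sumN n h.
Proof. induction n; intros H; simpl; auto. rewrite IHn, H; auto; intros; apply H; lia. Qed.

Lemma sumN_plus n g h : sumN n (fun q => g q + h q) = sumN n g + sumN n h.
Proof. induction n; simpl; [ring| rewrite IHn; ring]. Qed.

Lemma sumN_scal n a g : sumN n (fun q => a * g q) = a * sumN n g.
Proof. induction n; simpl; [ring| rewrite IHn; ring]. Qed.

Lemma sumN_zero n : sumN n (fun _ => 0) = 0.
Proof. induction n; simpl; [ring| rewrite IHn; ring]. Qed.

Lemma sumN_swap n p (g : nat -> nat -> R) :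
  sumN n (fun r => sumN p (fun q => g r q)) = sumN p (fun q => sumN n (fun r => g r q)).
Proof.
  induction n; simpl. rewrite sumN_zero; auto.
  rewrite IHn, <- sumN_plus. reflexivity.
Qed.

Lemma sumN_ind n s v : (s < n)%nat ->
  sumN n (fun q => (if Nat.eqb s q then 1 else 0) * v q) = v s.
Proof.
  induction n; intros H; [lia|]. simpl.
  destruct (Nat.eq_dec s n) as [->|Hne].
  - rewrite Nat.eqb_refl. rewrite (sumN_ext _ _ (fun _ => 0)). rewrite sumN_zero; ring.
    intros q Hq. destruct (Nat.eqb_spec n q); [lia| ring].
  - rewrite IHn by lia. destruct (Nat.eqb_spec s n); [lia| ring].
Qed.

Lemma sumN_abs n a b c : (forall q, (q < n)%nat -> Rabs (b q) <= c) ->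
  Rabs (sumN n (fun q => a q * b q)) <= sumN n (fun q => Rabs (a q)) * c.
Proof.
  induction n; intros H; simpl. rewrite Rabs_R0; lra.
  eapply Rle_trans; [apply Rabs_triang|]. rewrite Rmult_plus_distr_r.
  apply Rplus_le_compat. apply IHn; intros; apply H; lia.
  rewrite Rabs_mult. apply Rmult_le_compat_l. apply Rabs_pos. apply H; lia.
Qed.

Lemma sumN_nonneg n g : (forall q, (q < n)%nat -> 0 <= g q) -> 0 <= sumN n g.
Proof. induction n; intros H; simpl; [lra|]. assert (0 <= g n) by (apply H; lia).
  assert (0 <= sumN n g) by (apply IHn; intros; apply H; lia). lra. Qed.

Lemma sumN_le_term n g q : (forall q, (q < n)%nat -> 0 <= g q) -> (q < n)%nat -> g q <= sumN n g.
Proof.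
  induction n; intros H Hq; [lia|]. simpl.
  destruct (Nat.eq_dec q n) as [->|Hne].
  - assert (0 <= sumN n g) by (apply sumN_nonneg; intros; apply H; lia). lra.
  - assert (g q <= sumN n g) by (apply IHn; [intros; apply H; lia| lia]).
    assert (0 <= g n) by (apply H; lia). lra.
Qed.

Lemma sumN_add a b g : sumN (a + b) g = sumN a g + sumN b (fun j => g (a + j)%nat).
Proof. induction b; simpl. rewrite Nat.add_0_r; ring. rewrite Nat.add_succ_r; simpl. rewrite IHb; ring. Qed.

Lemma sumN_block m k g : sumN (m * k) g = sumN m (fun i => sumN k (fun c => g (i * k + c)%nat)).
Proof.
  induction m; simpl; auto. rewrite Nat.add_comm, sumN_add, IHm. reflexivity.
Qed.

Lemma sgn_abs l : sgn l * l = Rabs l.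
Proof. unfold sgn, Rabs. destruct (Rlt_dec 0 l), (Rcase_abs l); try destruct (Rlt_dec l 0); lra. Qed.

Lemma sgn_le l : Rabs (sgn l) <= 1.
Proof. unfold sgn. destruct (Rlt_dec 0 l); [|destruct (Rlt_dec l 0)];
  unfold Rabs; destruct Rcase_abs; lra. Qed.

Lemma Rabs_mul_le u v A B : Rabs u <= A -> Rabs v <= B -> Rabs (u * v) <= A * B.
Proof. intros. rewrite Rabs_mult. apply Rmult_le_compat; auto; apply Rabs_pos. Qed.

Lemma Rabs_div_le u d A : 0 < d -> Rabs u <= A -> Rabs (u / d) <= A / d.
Proof. intros. unfold Rdiv. rewrite Rabs_mult, Rabs_inv, (Rabs_right d) by lra.
  apply Rmult_le_compat_r; auto. left; apply Rinv_0_lt_compat; auto. Qed.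

Lemma Rabs_add_le u v A B : Rabs u <= A -> Rabs v <= B -> Rabs (u + v) <= A + B.
Proof. intros. eapply Rle_trans; [apply Rabs_triang| lra]. Qed.

Lemma Rabs_sub_le u v A B : Rabs u <= A -> Rabs v <= B -> Rabs (u - v) <= A + B.
Proof. intros. eapply Rle_trans; [apply Rabs_triang| rewrite Rabs_Ropp; lra]. Qed.

Lemma res_core (F : R -> R -> R) (Mf : R -> R) (l t x dx rho Q K1 K2 K3 K4 L : R) :
 0 < dx -> 0 < rho -> 0 < t -> 0 < Q -> Rabs l <= L ->
 smooth_pos F ->
 (forall y, Mf y = PDt F t y + l * PDx F t y + F t y) ->
 (forall s y, t <= s -> Rabs (PDt (PDt F) s y) <= K1 * Q) ->
 (forall y, Rabs (PDx (PDt F) t y) <= K2 * Q) ->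
 (forall y, Rabs (PDx (PDx (PDt F)) t y) <= K3 * Q) ->
 (forall y, Rabs (PDx (PDx (PDx F)) t y) <= K4 * Q) ->
 Rabs ( (F (t + rho * dx) x - F t x) / (rho * dx)
   + l / (2 * dx) * (F t (x + dx) - F t (x - dx))
   - Rabs l / (2 * dx) * (F t (x + dx) - 2 * F t x + F t (x - dx))
   - ((Mf (x - dx) + 2 * Mf x + Mf (x + dx)) / 4
      + sgn l / 4 * (Mf (x - dx) - Mf (x + dx))
      - (F t (x - dx) + 2 * F t x + F t (x + dx)) / 4
      - sgn l / 4 * (F t (x - dx) - F t (x + dx))))
 <= (K1 * rho + K2) * Q * dx + (2 * L * K4 + (K3 + L * K4)) * Q * dx ^ 2.
Proof.
  intros Hdx Hrho Ht HQ HL HF HM H1 H2 H3 H4.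
  assert (HK1 : 0 <= K1 * Q) by (eapply Rle_trans; [apply Rabs_pos| apply (H1 t x); lra]).
  assert (HK2 : 0 <= K2 * Q) by (eapply Rle_trans; [apply Rabs_pos| apply (H2 x)]).
  assert (HK3 : 0 <= K3 * Q) by (eapply Rle_trans; [apply Rabs_pos| apply (H3 x)]).
  assert (HK4 : 0 <= K4 * Q) by (eapply Rle_trans; [apply Rabs_pos| apply (H4 x)]).
  assert (HL0 : 0 <= L) by (eapply Rle_trans; [apply Rabs_pos| exact HL]).
  set (dt := rho * dx).
  assert (Hdt : 0 < dt) by (unfold dt; nra).
  assert (Dh : forall w y, derivable_pt_lim (fun z => iterD w F t z) y (iterD (false :: w) F t y)).
  { intros w y. apply diffble_lim. apply (HF w t y Ht). }
  assert (Dt : forall w s y, 0 < s -> derivable_pt_lim (fun z => iterD w F z y) s (iterD (true :: w) F s y)).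
  { intros w s y Hs. apply diffble_lim. apply (HF w s y Hs). }
  pose (g := fun y => PDt F t y + l * PDx F t y).
  pose (g1 := fun y => PDx (PDt F) t y + l * PDx (PDx F) t y).
  pose (g2 := fun y => PDx (PDx (PDt F)) t y + l * PDx (PDx (PDx F)) t y).
  assert (Dg : forall y, derivable_pt_lim g y (g1 y)).
  { intros y. apply dext with (plus_fct (fun z => iterD [true] F t z) (mult_real_fct l (fun z => iterD [false] F t z))).
    apply derivable_pt_lim_plus. apply (Dh [true]). apply derivable_pt_lim_scal, (Dh [false]).
    intros z; reflexivity. }
  assert (Dg1 : forall y, derivable_pt_lim g1 y (g2 y)).
  { intros y. apply dext with (plus_fct (fun z => iterD [false;true] F t z) (mult_real_fct l (fun z => iterD [false;false] F t z))).
    apply derivable_pt_lim_plus. apply (Dh [false;true]). apply derivable_pt_lim_scal, (Dh [false;false]).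
    intros z; reflexivity. }
  set (KG := (K3 + L * K4) * Q).
  assert (Hg2 : forall y, Rabs (g2 y) <= KG).
  { intros y. unfold g2, KG. eapply Rle_trans. apply Rabs_add_le. apply H3.
    apply Rabs_mul_le. exact HL. apply H4. nra. }
  assert (TG : forall b, Rabs (g b - g x - (b - x) * g1 x) <= KG * (b - x)^2).
  { intros b. apply T2 with (h2 := g2). intros y _. auto. }
  assert (TH : forall b, Rabs (F t b - F t x - (b - x) * PDx F t x - (b - x)^2/2 * PDx (PDx F) t x)
                 <= K4 * Q * (b - x)^2 * Rabs (b - x)).
  { intros b. apply T3 with (h := fun z => F t z) (h1 := fun z => PDx F t z) (h2 := fun z => PDx (PDx F) t z)
      (h3 := fun z => PDx (PDx (PDx F)) t z).
    intros y _. split; [apply (Dh []) | split; [apply (Dh [false]) | split; [apply (Dh [false;false])| apply H4]]]. }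
  assert (TT : Rabs (F (t + dt) x - F t x - (t + dt - t) * PDt F t x) <= K1 * Q * (t + dt - t)^2).
  { apply (T2 (fun s => F s x) (fun s => PDt F s x) (fun s => PDt (PDt F) s x) t (t + dt)).
    intros y Hy. unfold btw, Rmin, Rmax in Hy. destruct (Rle_dec t (t + dt)); [|lra].
    split; [apply (Dt []); lra| split; [apply (Dt [true]); lra| apply H1; lra]]. }
  replace (t + dt - t) with dt in TT by ring.
  pose proof (TG (x + dx)) as TGp. pose proof (TG (x - dx)) as TGm.
  pose proof (TH (x + dx)) as THp. pose proof (TH (x - dx)) as THm.
  replace (x + dx - x) with dx in TGp, THp by ring.
  replace (x - dx - x) with (- dx) in TGm, THm by ring.
  rewrite Rabs_Ropp in THm. rewrite (Rabs_right dx) in THp, THm by lra.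
  set (Tt := F (t + dt) x - F t x - dt * PDt F t x) in *.
  set (Ep := F t (x + dx) - F t x - dx * PDx F t x - dx ^ 2 / 2 * PDx (PDx F) t x) in *.
  set (Em := F t (x - dx) - F t x - - dx * PDx F t x - (- dx) ^ 2 / 2 * PDx (PDx F) t x) in *.
  set (Gp := g (x + dx) - g x - dx * g1 x) in *.
  set (Gm := g (x - dx) - g x - - dx * g1 x) in *.
  assert (E : (F (t + dt) x - F t x) / dt
   + l / (2 * dx) * (F t (x + dx) - F t (x - dx))
   - Rabs l / (2 * dx) * (F t (x + dx) - 2 * F t x + F t (x - dx))
   - ((Mf (x - dx) + 2 * Mf x + Mf (x + dx)) / 4
      + sgn l / 4 * (Mf (x - dx) - Mf (x + dx))
      - (F t (x - dx) + 2 * F t x + F t (x + dx)) / 4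
      - sgn l / 4 * (F t (x - dx) - F t (x + dx)))
   = Tt / dt + l * (Ep - Em) / (2 * dx) - Rabs l * (Ep + Em) / (2 * dx)
     - (Gm + Gp) / 4 + sgn l * dx * PDx (PDt F) t x / 2 - sgn l * (Gm - Gp) / 4).
  { rewrite !HM. unfold Tt, Ep, Em, Gp, Gm, g, g1. rewrite <- (sgn_abs l). field. lra. }
  fold dt. rewrite E. clear E.
  assert (b1 : Rabs (Tt / dt) <= K1 * Q * rho * dx).
  { eapply Rle_trans. apply Rabs_div_le; eauto. right. unfold dt. field. lra. }
  assert (b2 : Rabs (l * (Ep - Em) / (2 * dx)) <= L * K4 * Q * dx ^ 2).
  { eapply Rle_trans. apply Rabs_div_le; [lra|]. apply Rabs_mul_le; [exact HL| apply Rabs_sub_le; eauto].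
    right. field. lra. }
  assert (b3 : Rabs (Rabs l * (Ep + Em) / (2 * dx)) <= L * K4 * Q * dx ^ 2).
  { eapply Rle_trans. apply Rabs_div_le; [lra|]. apply Rabs_mul_le; [rewrite Rabs_Rabsolu; exact HL| apply Rabs_add_le; eauto].
    right. field. lra. }
  assert (b4 : Rabs ((Gm + Gp) / 4) <= KG * dx ^ 2 / 2).
  { eapply Rle_trans. apply Rabs_div_le; [lra|]. apply Rabs_add_le; eauto.
    right. field. }
  assert (b5 : Rabs (sgn l * dx * PDx (PDt F) t x / 2) <= K2 * Q * dx / 2).
  { eapply Rle_trans. apply Rabs_div_le; [lra|]. apply Rabs_mul_le; [apply Rabs_mul_le; [apply sgn_le| apply Rle_refl]| apply H2].
    right. rewrite Rabs_right by lra. field. }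
  assert (b6 : Rabs (sgn l * (Gm - Gp) / 4) <= KG * dx ^ 2 / 2).
  { eapply Rle_trans. apply Rabs_div_le; [lra|]. apply Rabs_mul_le; [apply sgn_le| apply Rabs_sub_le; eauto].
    right. field. }
  apply Rabs_bnd in b1, b2, b3, b4, b5, b6. apply Rabs_le.
  unfold KG in *.
  assert (0 <= K2 * Q * dx) by nra.
  split; nra.
Qed.
Theorem mainTheorem4
  (m k : nat) (lam : nat -> R)
  (M : nat -> (nat -> R) -> (nat -> R))
  (D Dinv : nat -> nat -> R)
  (f : nat -> nat -> R -> R -> R)
  (Hm : (1 <= m)%nat) (Hk : (1 <= k)%nat)
  (* Maxwellians: smooth, consistent *)
  (HMsmooth : forall i c, (i < m)%nat -> (c < k)%nat -> smoothRk k (fun v => M i v c))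
  (HMcons : forall v c, (c < k)%nat -> sumN m (fun i => M i v c) = v c)
  (* the matrix D *)
  (HD1 : forall c s, (c < k)%nat -> (s < m * k)%nat ->
           D c s = if Nat.eqb (s mod k) c then 1 else 0)
  (HDinv1 : forall r s, (r < m * k)%nat -> (s < m * k)%nat ->
           sumN (m * k) (fun q => D r q * Dinv q s) = if Nat.eqb r s then 1 else 0)
  (HDinv2 : forall r s, (r < m * k)%nat -> (s < m * k)%nat ->
           sumN (m * k) (fun q => Dinv r q * D q s) = if Nat.eqb r s then 1 else 0)
  (HDTD : forall s s', (s < m * k)%nat -> (s' < m * k)%nat -> (s / k <> s' / k)%nat ->
           sumN (m * k) (fun r => D r s * D r s') = 0)
  (HAsym : forall r s, (r < m * k)%nat -> (s < m * k)%nat ->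
           AA m k D Dinv lam r s = AA m k D Dinv lam s r)
  (* A_11 = 0 *)
  (HA11 : forall r s, (r < k)%nat -> (s < k)%nat -> AA m k D Dinv lam r s = 0)
  (* the exact global smooth solution of the BGK system *)
  (Hfsmooth : forall i c, (i < m)%nat -> (c < k)%nat -> smooth_pos (f i c))
  (Hpde : forall i c t x, (i < m)%nat -> (c < k)%nat -> 0 < t ->
           PDt (f i c) t x + lam i * PDx (f i c) t x
           = M i (uvec m f t x) c - f i c t x)
  (* decay estimates *)
  (HdecZ : forall beta, (beta <= 3)%nat -> exists C, forall r t x,
           (r < m * k)%nat -> 1 <= t ->
           Rabs (DxN beta (ZZ m k D f r) t x) <= C * Rpower t (- (1/2 + INR beta / 2)))
  (HdecZt : forall beta, (beta <= 3)%nat -> exists C, forall r t x,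
           (k <= r < m * k)%nat -> 1 <= t ->
           Rabs (DxN beta (ZZ m k D f r) t x) <= C * Rpower t (- (1 + INR beta / 2)))
  (HdecZ_t : forall beta, (beta <= 3)%nat -> exists C, forall r t x,
           (r < m * k)%nat -> 1 <= t ->
           Rabs (DxN beta (PDt (ZZ m k D f r)) t x) <= C * Rpower t (- (1 + INR beta / 2)))
  (HdecZt_t : forall beta, (beta <= 3)%nat -> exists C, forall r t x,
           (k <= r < m * k)%nat -> 1 <= t ->
           Rabs (DxN beta (PDt (ZZ m k D f r)) t x) <= C * Rpower t (- (3/2 + INR beta / 2)))
  (* extra decay available when A_11 = 0 *)
  (HdecA11 : exists C, forall t x, 1 <= t ->
           (forall c, (c < k)%nat ->
              Rabs (PDt (PDt (uu m f c)) t x) <= C * Rpower t (-2) /\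
              Rabs (PDx (PDt (uu m f c)) t x) <= C * Rpower t (-2)) /\
           (forall r, (k <= r < m * k)%nat ->
              Rabs (PDt (ZZ m k D f r) t x) <= C * Rpower t (-2) /\
              Rabs (PDt (PDt (ZZ m k D f r)) t x) <= C * Rpower t (-2)))
  (rho : R) (Hrho : 0 < rho) :
  exists C T0, 0 < T0 /\
    forall dx t x, 0 < dx -> T0 <= t ->
      (forall r, (r < k)%nat ->
         Rabs (trunc_Z m k D lam M f (rho * dx) dx r t x)
           <= C * (dx * Rpower t (-2) + dx ^ 2 * Rpower t (- (3/2))))
      /\
      (forall r, (k <= r < m * k)%nat ->
         Rabs (trunc_Z m k D lam M f (rho * dx) dx r t x)
           <= C * (dx * Rpower t (-2) + dx ^ 2 * Rpower t (- (3/2)))).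
Proof.
  assert (Hk0 : k <> 0%nat) by lia.
  pose (Fg := fun s => f (s / k)%nat (s mod k)%nat).
  assert (Hdiv : forall s, (s < m * k)%nat -> (s / k < m)%nat).
  { intros s Hs. apply Nat.Div0.div_lt_upper_bound. lia. }
  assert (Hmod : forall s, (s mod k < k)%nat) by (intros; apply Nat.mod_upper_bound; auto).
  assert (HFs : forall s, (s < m * k)%nat -> smooth_pos (Fg s)).
  { intros s Hs. apply Hfsmooth; auto. }
  assert (HZlin : forall w r t x, 0 < t -> iterD w (ZZ m k D f r) t x
             = sumN (m * k) (fun q => D r q * iterD w (Fg q) t x)).
  { intros w r t x Ht. change (ZZ m k D f r) with (fun t x => sumN (m * k) (fun q => D r q * Fg q t x)).
    apply lin; auto. }
  assert (HFinv : forall w s t x, (s < m * k)%nat -> 0 < t -> iterD w (Fg s) t x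
             = sumN (m * k) (fun r => Dinv s r * iterD w (ZZ m k D f r) t x)).
  { intros w s t x Hs Ht.
    rewrite (sumN_ext _ _ (fun r => sumN (m * k) (fun q => Dinv s r * D r q * iterD w (Fg q) t x))).
    2:{ intros r Hr. rewrite HZlin by auto. rewrite <- sumN_scal. apply sumN_ext. intros; ring. }
    rewrite sumN_swap.
    rewrite (sumN_ext _ _ (fun q => (if Nat.eqb s q then 1 else 0) * iterD w (Fg q) t x)).
    - rewrite sumN_ind; auto.
    - intros q Hq. rewrite <- HDinv2 by auto. rewrite <- (Rmult_comm (iterD w (Fg q) t x)), <- sumN_scal.
      apply sumN_ext. intros; ring. }
  assert (HZu : forall c, (c < k)%nat -> ZZ m k D f c = uu m f c).
  { intros c Hc. apply functional_extensionality; intro t. apply functional_extensionality; intro x.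
    unfold ZZ, uu. rewrite sumN_block. apply sumN_ext. intros i Hi.
    rewrite (sumN_ext _ _ (fun c' => (if Nat.eqb c c' then 1 else 0) * f i c' t x)).
    - apply sumN_ind; auto.
    - intros c' Hc'. rewrite HD1 by (auto; nia).
      replace (i * k + c')%nat with (c' + i * k)%nat by lia.
      rewrite Nat.Div0.mod_add, Nat.mod_small by auto.
      rewrite Nat.div_add by auto. rewrite Nat.div_small by auto. simpl.
      rewrite Nat.eqb_sym. reflexivity. }
  pose (P := fun t => Rpower t (-2)).
  assert (HP : forall t, 0 < P t) by (intros; unfold P, Rpower; apply exp_pos).
  pose (Bs := sumN (m * k) (fun s => sumN (m * k) (fun r => Rabs (Dinv s r)))).
  assert (Hconv : forall w, (exists K, 0 <= K /\ forall r t x, (r < m * k)%nat -> 1 <= t ->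
             Rabs (iterD w (ZZ m k D f r) t x) <= K * P t) ->
          exists K, 0 <= K /\ forall s t x, (s < m * k)%nat -> 1 <= t ->
             Rabs (iterD w (Fg s) t x) <= K * P t).
  { intros w [K [HK0 HK]]. exists (Bs * K). split.
    - apply Rmult_le_pos; auto. apply sumN_nonneg; intros; apply sumN_nonneg; intros; apply Rabs_pos.
    - intros s t x Hs Ht. rewrite HFinv by (auto; lra).
      eapply Rle_trans. apply sumN_abs. intros q Hq. apply HK; auto.
      rewrite Rmult_assoc. apply Rmult_le_compat_r.
      + pose proof (HP t); nra.
      + apply (sumN_le_term (m * k) (fun s => sumN (m * k) (fun r => Rabs (Dinv s r)))); auto.
        intros; apply sumN_nonneg; intros; apply Rabs_pos. }
  destruct HdecA11 as [CA HA].
  assert (W1 : exists K, 0 <= K /\ forall s t x, (s < m * k)%nat -> 1 <= t ->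
             Rabs (iterD [true; true] (Fg s) t x) <= K * P t).
  { apply Hconv. exists (Rabs CA). split; [apply Rabs_pos|]. intros r t x Hr Ht.
    assert (Hmul : CA * P t <= Rabs CA * P t) by (apply Rmult_le_compat_r; [left; apply HP| apply Rle_abs]).
    destruct (Nat.lt_ge_cases r k) as [Hrk|Hrk].
    - rewrite HZu by auto. destruct (HA t x Ht) as [Hu _]. destruct (Hu r Hrk) as [X _].
      simpl. unfold P in *. lra.
    - destruct (HA t x Ht) as [_ Hz]. destruct (Hz r (conj Hrk Hr)) as [_ X].
      simpl. unfold P in *. lra. }
  assert (W2 : exists K, 0 <= K /\ forall s t x, (s < m * k)%nat -> 1 <= t ->
             Rabs (iterD [false; true] (Fg s) t x) <= K * P t).
  { apply Hconv. destruct (HdecZt_t 1%nat ltac:(lia)) as [C1 HC1].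
    exists (Rabs CA + Rabs C1). split; [pose proof (Rabs_pos CA); pose proof (Rabs_pos C1); lra|]. intros r t x Hr Ht.
    assert (Hmul : CA * P t <= (Rabs CA + Rabs C1) * P t) by
      (apply Rmult_le_compat_r; [left; apply HP| pose proof (Rle_abs CA); pose proof (Rabs_pos C1); lra]).
    assert (Hmul2 : C1 * P t <= (Rabs CA + Rabs C1) * P t) by
      (apply Rmult_le_compat_r; [left; apply HP| pose proof (Rle_abs C1); pose proof (Rabs_pos CA); lra]).
    destruct (Nat.lt_ge_cases r k) as [Hrk|Hrk].
    - rewrite HZu by auto. destruct (HA t x Ht) as [Hu _]. destruct (Hu r Hrk) as [_ X].
      simpl. unfold P in *. lra.
    - pose proof (HC1 r t x (conj Hrk Hr) Ht) as X.
      assert (E : - (3/2 + INR 1 / 2) = -2) by (simpl; lra). rewrite E in X.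
      simpl. unfold P in *. simpl in X. lra. }
  assert (W3 : exists K, 0 <= K /\ forall s t x, (s < m * k)%nat -> 1 <= t ->
             Rabs (iterD [false; false; true] (Fg s) t x) <= K * P t).
  { apply Hconv. destruct (HdecZ_t 2%nat ltac:(lia)) as [C1 HC1].
    exists (Rabs C1). split; [apply Rabs_pos|]. intros r t x Hr Ht.
    assert (Hmul2 : C1 * P t <= Rabs C1 * P t) by
      (apply Rmult_le_compat_r; [left; apply HP| apply Rle_abs]).
    pose proof (HC1 r t x Hr Ht) as X.
    assert (E : - (1 + INR 2 / 2) = -2) by (simpl; lra). rewrite E in X.
    simpl. unfold P in *. simpl in X. lra. }
  assert (W4 : exists K, 0 <= K /\ forall s t x, (s < m * k)%nat -> 1 <= t ->
             Rabs (iterD [false; false; false] (Fg s) t x) <= K * P t).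
  { apply Hconv. destruct (HdecZ 3%nat ltac:(lia)) as [C1 HC1].
    exists (Rabs C1). split; [apply Rabs_pos|]. intros r t x Hr Ht.
    assert (Hmul2 : C1 * P t <= Rabs C1 * P t) by
      (apply Rmult_le_compat_r; [left; apply HP| apply Rle_abs]).
    pose proof (HC1 r t x Hr Ht) as X.
    assert (E : - (1/2 + INR 3 / 2) = -2) by (simpl; lra). rewrite E in X.
    simpl. unfold P in *. simpl in X. lra. }
  destruct W1 as [K1 [HK1 W1]]. destruct W2 as [K2 [HK2 W2]].
  destruct W3 as [K3 [HK3 W3]]. destruct W4 as [K4 [HK4 W4]].
  pose (L := sumN m (fun i => Rabs (lam i))).
  assert (HL : forall i, (i < m)%nat -> Rabs (lam i) <= L).
  { intros i Hi. apply (sumN_le_term m (fun i => Rabs (lam i))); auto. intros; apply Rabs_pos. }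
  assert (HPdec : forall t s, 1 <= t -> t <= s -> P s <= P t).
  { intros t s Ht Hs. unfold P. replace (-2) with (- (2)) by ring. rewrite !Rpower_Ropp.
    apply Rinv_le_contravar. unfold Rpower; apply exp_pos.
    apply Rle_Rpower_l; lra. }
  pose (Cres := (K1 * rho + K2) + (2 * L * K4 + (K3 + L * K4))).
  assert (Hres : forall s dx t x, (s < m * k)%nat -> 0 < dx -> 1 <= t ->
      Rabs (roe_residual m lam M f (rho * dx) dx (s / k)%nat (s mod k)%nat t x)
        <= Cres * (dx * P t + dx ^ 2 * P t)).
  { intros s dx t x Hs Hdx Ht.
    assert (HL0 : 0 <= L) by (eapply Rle_trans; [apply Rabs_pos| apply (HL (s / k)%nat); auto]).
    unfold roe_residual. cbv zeta.
    eapply Rle_trans.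
    - apply (res_core (Fg s) (fun xx => M (s / k)%nat (uvec m f t xx) (s mod k)%nat)
        (lam (s / k)%nat) t x dx rho (P t) K1 K2 K3 K4 L); auto; try lra.
      + intros y. pose proof (Hpde (s / k)%nat (s mod k)%nat t y ltac:(auto) ltac:(auto) ltac:(lra)) as HH.
        unfold Fg. lra.
      + intros s' y Hs'. eapply Rle_trans. apply (W1 s s' y); auto; lra.
        apply Rmult_le_compat_l; auto.
      + intros y. apply (W2 s t y); auto.
      + intros y. apply (W3 s t y); auto.
      + intros y. apply (W4 s t y); auto.
    - unfold Cres. pose proof (HP t).
      assert (0 <= K1 * rho) by nra. assert (0 <= 2 * L * K4 + (K3 + L * K4)) by nra.
      assert (0 <= dx ^ 2) by nra.
      assert (A1 : 0 <= (K1 * rho + K2) * P t * dx ^ 2) by (repeat apply Rmult_le_pos; nra).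
      assert (A2 : 0 <= (2 * L * K4 + (K3 + L * K4)) * P t * dx) by (repeat apply Rmult_le_pos; nra).
      match goal with |- ?l <= (?a + ?b) * (dx * ?p + dx ^ 2 * ?p) => replace ((a + b) * (dx * p + dx ^ 2 * p)) with (l + (a * p * dx ^ 2 + b * p * dx)) by ring end. lra. }
  pose (Ds := sumN (m * k) (fun r => sumN (m * k) (fun s => Rabs (D r s)))).
  assert (HDs : 0 <= Ds) by (apply sumN_nonneg; intros; apply sumN_nonneg; intros; apply Rabs_pos).
  assert (HCres : 0 <= Cres) by (unfold Cres; assert (0 <= L) by (apply sumN_nonneg; intros; apply Rabs_pos); nra).
  assert (Hfin : forall r dx t x, (r < m * k)%nat -> 0 < dx -> 1 <= t ->
      Rabs (trunc_Z m k D lam M f (rho * dx) dx r t x)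
        <= (Ds * Cres) * (dx * Rpower t (-2) + dx ^ 2 * Rpower t (- (3/2)))).
  { intros r dx t x Hr Hdx Ht. unfold trunc_Z.
    eapply Rle_trans. apply sumN_abs. intros s Hs. apply Hres; auto.
    assert (HPP : P t <= Rpower t (- (3/2))) by (apply Rle_Rpower; lra).
    pose proof (HP t).
    assert (S1 : sumN (m * k) (fun s => Rabs (D r s)) <= Ds).
    { apply (sumN_le_term (m * k) (fun r => sumN (m * k) (fun s => Rabs (D r s)))); auto.
      intros; apply sumN_nonneg; intros; apply Rabs_pos. }
    assert (S0 : 0 <= sumN (m * k) (fun s => Rabs (D r s))) by (apply sumN_nonneg; intros; apply Rabs_pos).
    rewrite Rmult_assoc. apply Rmult_le_compat; auto.
    - apply Rmult_le_pos; auto. assert (0 <= dx^2) by nra. nra.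
    - apply Rmult_le_compat_l; auto. unfold P in *.
      assert (0 <= dx^2) by nra. nra. }
  exists (Ds * Cres), 1. split; [lra|].
  intros dx t x Hdx Ht. split.
  - intros r Hr. apply Hfin; auto. nia.
  - intros r Hr. apply Hfin; auto. lia.
Qed.
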